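(* Let $N$ be a positive integer, $L>0$, and $\zeta=(\zeta_0,\dots,\zeta_{N+2})\in\mathbb{R}^{N+3}$ with $\zeta_0>\zeta_1>\dots>\zeta_{N+1}>\zeta_{N+2}=0$. With $W^\zeta$ as defined in the context, for any $y\in\mathbb{R}^{N+1}$ the minimization problem defining $W^\zeta(y)$ has an optimal solution $(\nu^*,\alpha^* )$ with $\alpha^*\in\Delta_{N+2}$ of the form \[ \alpha^*=(\underbrace{0,\dots,0}_{m},\alpha^*_m,1-\alpha^*_m,\underbrace{0,\dots,0}_{N-m}) \] for some $m\in\{0,\dots,N\}$.
   Context: Let $e_0,\dots,e_N$ denote the standard unit vectors of $\mathbb{R}^{N+1}$ (zero-based indexing). Define for $i=0,\dots,N+1$: $x_i=-\sum_{j=0}^{i-1}\frac{\zeta_j-\zeta_{i+1}}{\sqrt{\zeta_j-\zeta_{j+1}}}e_j\in\mathbb{R}^{N+1}$; $g_i=L\sqrt{\zeta_i-\zeta_{i+1}}\,e_i$ for $i=0,\dots,N$ and $g_{N+1}=0$; $f_i=\frac L2(\zeta_i+\zeta_{i+1})$ for $i=0,\dots,N$ and $f_{N+1}=0$. For $y\in\mathbb{R}^{N+1}$, $\nu\in\mathbb{R}^{N+1}$, $\alpha=(\alpha_0,\dots,\alpha_{N+1})\in\mathbb{R}^{N+2}$ let $w^\zeta(y,\nu,\alpha)=\frac L2\|y+\nu-\sum_{i=0}^{N+1}\alpha_i(x_i-\frac1Lg_i)\|^2+\sum_{i=0}^{N+1}\alpha_i(f_i-\frac1{2L}\|g_i\|^2)$,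 and $W^\zeta(y)=\min\{w^\zeta(y,\nu,\alpha):\nu\in\mathbb{R}^{N+1}_+,\ \alpha\in\Delta_{N+2}\}$, where $\mathbb{R}^{N+1}_+$ is the nonnegative orthant and $\Delta_{N+2}=\{\alpha\in\mathbb{R}^{N+2}:\alpha_i\geq0,\ \sum_i\alpha_i=1\}$ (entries indexed $0,\dots,N+1$). *)

(* Defs.v *)
From mathcomp Require Import all_boot all_order all_algebra.
From mathcomp Require Import reals.
Set Implicit Arguments. Unset Strict Implicit. Unset Printing Implicit Defensive.
Import Order.TTheory GRing.Theory Num.Theory.
Local Open Scope ring_scope.

Section Defs.
Variable R : realType.
Variable N : nat.
Variable L : R.
Variable zeta : nat -> R. (* only zeta 0, ..., zeta (N+2) matter *)

Definition sqnorm (v : 'I_N.+1 -> R) : R := \sum_(j < N.+1) v j ^+ 2.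

Definition xpt (i : nat) : 'I_N.+1 -> R := fun j =>
  if (j < i)%N then - ((zeta j - zeta i.+1) / Num.sqrt (zeta j - zeta j.+1))
  else 0.

Definition gpt (i : nat) : 'I_N.+1 -> R := fun j =>
  if (i <= N)%N && (nat_of_ord j == i) then L * Num.sqrt (zeta i - zeta i.+1)
  else 0.

Definition fval (i : nat) : R :=
  if (i <= N)%N then L / 2 * (zeta i + zeta i.+1) else 0.

Definition wfun (y nu : 'I_N.+1 -> R) (alpha : 'I_N.+2 -> R) : R :=
  L / 2 * sqnorm (fun j => y j + nu j
      - \sum_(i < N.+2) alpha i * (xpt i j - L^-1 * gpt i j))
  + \sum_(i < N.+2) alpha i * (fval i - (2 * L)^-1 * sqnorm (gpt i)).

Definition nonneg_orthant (nu : 'I_N.+1 -> R) : Prop := forall j, 0 <= nu j.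

Definition in_simplex (alpha : 'I_N.+2 -> R) : Prop :=
  (forall i, 0 <= alpha i) /\ \sum_(i < N.+2) alpha i = 1.

End Defs.

(* Main.v *)
Require Import Defs.
From mathcomp Require Import all_boot all_order all_algebra.
From mathcomp Require Import reals.
From mathcomp Require Import all_classical all_reals all_analysis.
From mathcomp Require Import ring lra zify.
Set Implicit Arguments. Unset Strict Implicit. Unset Printing Implicit Defensive.
Import Order.TTheory GRing.Theory Num.Theory.
Import numFieldNormedType.Exports.
Local Open Scope ring_scope.
Lemma cont_sum (R : realType) n (g : 'I_n -> R -> R) :
  (forall j, continuous (g j)) -> continuous (fun e => \sum_(j < n) g j e).
Proof.
move=> hg; apply: continuous_big => //.
exact: add_continuous.
Qed.

Lemma cont_pp (R : realType) (f : R -> R) :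
  continuous f -> continuous (fun e => Num.max (f e) 0).
Proof.
move=> hf x; apply: (@continuous_max _ _ f (fun _ => 0)) => //.
  exact: hf. exact: cst_continuous.
Qed.

Section CC.
Variable R : realType.
Implicit Types f g : R -> R.
Lemma cD f g : continuous f -> continuous g -> continuous (fun e => f e + g e).
Proof. by move=> hf hg x; exact: (continuousD (hf x) (hg x)). Qed.
Lemma cM f g : continuous f -> continuous g -> continuous (fun e => f e * g e).
Proof. by move=> hf hg x; exact: (continuousM (hf x) (hg x)). Qed.
Lemma cC (c : R) : continuous (fun _ : R => c).
Proof. exact: cst_continuous. Qed.
Lemma cI : continuous (fun e : R => e).
Proof. by move=> x; exact: cvg_id. Qed.
Lemma cX f : continuous f -> continuous (fun e => f e ^+ 2).
Proof. by move=> hf; under eq_fun do rewrite expr2; exact: cM. Qed.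
End CC.

Lemma cont_test (R : realType) n (L : R) (c d : 'I_n -> R) (z : 'I_n -> R) :
  continuous (fun e : R => L / 2 * \sum_(j < n) (Num.max (c j + Num.max (z j - e) 0 * d j) 0) ^+ 2 + L * e).
Proof.
apply: cD; apply: cM; try exact: cC; try exact: cI.
apply: cont_sum => j; apply: cX; apply: cont_pp; apply: cD; first exact: cC.
apply: cM; last exact: cC.
apply: cont_pp; apply: cD; first exact: cC.
by move=> x; apply: cvgN; exact: cvg_id.
Qed.

Section Alg.
Variable R : realType.
Variable N : nat.
Variable L : R.
Variable zeta : nat -> R.
Hypothesis hL : 0 < L.
Hypothesis hzeta : forall i : nat, (i <= N.+1)%N -> zeta i.+1 < zeta i.
Hypothesis hzero : zeta N.+2 = 0.

Lemma zmono a b : (b <= a)%N -> (a <= N.+2)%N -> zeta a <= zeta b.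
Proof.
move=> ba; elim: a ba => [|a IH].
  by rewrite leqn0 => /eqP ->.
rewrite leq_eqVlt => /orP [/eqP <- //|]; rewrite ltnS => ba aN.
apply: le_trans (IH ba (ltnW aN)).
by apply/ltW/hzeta.
Qed.

Definition sq j := Num.sqrt (zeta j - zeta j.+1).

Lemma sq_gt0 j : (j <= N.+1)%N -> 0 < sq j.
Proof. by move=> h; rewrite sqrtr_gt0 subr_gt0 hzeta. Qed.

Lemma sq_sqr j : (j <= N.+1)%N -> sq j ^+ 2 = zeta j - zeta j.+1.
Proof. by move=> h; rewrite sqr_sqrtr // subr_ge0 ltW // hzeta. Qed.

Definition Sf (a : 'I_N.+2 -> R) (j : nat) :=
  \sum_(i < N.+2) a i * (if (j <= i)%N then zeta j - zeta i.+1 else 0).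

Lemma u_eq (a : 'I_N.+2 -> R) (j : 'I_N.+1) :
  \sum_(i < N.+2) a i * (@xpt R N zeta i j - L^-1 * @gpt R N L zeta i j)
  = - (Sf a j / sq j).
Proof.
rewrite /Sf mulr_suml -sumrN; apply: eq_bigr => i _.
have jN : (j <= N)%N by rewrite -ltnS.
have s0 := sq_gt0 (leqW jN).
rewrite /xpt /gpt.
case: (ltngtP j i) => [ji|ij|ji].
- by rewrite andbF mulr0 subr0 /sq mulrN mulrA.
- by rewrite andbF !mulr0 subr0 mulr0 mul0r oppr0.
- rewrite andbT -ji jN sub0r mulrA mulVf ?gt_eqF // mul1r.
  rewrite -/(sq j) -[in RHS](sq_sqr (leqW jN)).
  by rewrite expr2 mulrN -mulrA mulfK ?gt_eqF.
Qed.

Lemma c_eq (i : 'I_N.+2) :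
  fval N L zeta i - (2 * L)^-1 * sqnorm (@gpt R N L zeta i) = L * zeta i.+1.
Proof.
rewrite /fval /sqnorm /gpt.
case: (leqP i N) => iN /=.
- rewrite (bigD1 (Ordinal (iN : (i < N.+1)%N))) //= eqxx big1 => [|k /negbTE]; last first.
    by rewrite -(inj_eq val_inj) /= => ->; rewrite expr0n.
  rewrite addr0 exprMn sq_sqr ?(leqW iN) //.
  field; by rewrite gt_eqF.
- have -> : i = N.+1 :> nat by apply/eqP; rewrite eqn_leq iN -ltnS ltn_ord.
  by rewrite big1 ?hzero ?mulr0 ?subr0 // => k _; rewrite expr0n.
Qed.


Lemma sum_if1 (n k : nat) (c : R) : (k < n)%N ->
  \sum_(i < n) (if nat_of_ord i == k then c else 0) = c.
Proof.
move=> h; rewrite (bigD1 (Ordinal h)) //= eqxx big1 ?addr0 // => i /negbTE.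
by rewrite -(inj_eq val_inj) /= => ->.
Qed.

Definition alst (m : nat) (a : R) (i : 'I_N.+2) : R :=
  if nat_of_ord i == m then a else if nat_of_ord i == m.+1 then 1 - a else 0.

Lemma alst_sum m a (F : nat -> R) : (m <= N)%N ->
  \sum_(i < N.+2) alst m a i * F (nat_of_ord i) = a * F m + (1 - a) * F m.+1.
Proof.
move=> mN.
rewrite (eq_bigr (fun i : 'I_N.+2 => (if nat_of_ord i == m then a * F m else 0)
   + (if nat_of_ord i == m.+1 then (1 - a) * F m.+1 else 0))); last first.
  move=> i _; rewrite /alst.
  case: (eqVneq (nat_of_ord i) m) => [->|im].
    by rewrite (ltn_eqF (ltnSn m)) addr0.
  by case: eqP => [->|_]; rewrite ?add0r ?mul0r ?addr0.
rewrite big_split /= !sum_if1 //; by rewrite ltnS // ltnW.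
Qed.

Definition pp (x : R) := Num.max x 0.

Lemma pp_ge0 x : 0 <= pp x.
Proof. by rewrite /pp le_max lexx orbT. Qed.

Lemma pp_id x : 0 <= x -> pp x = x.
Proof. by move=> h; rewrite /pp max_l. Qed.

Lemma pp_0 x : x <= 0 -> pp x = 0.
Proof. by move=> h; rewrite /pp max_r. Qed.

Lemma pp_fact x z : x + pp (z - x) - z = pp (x - z).
Proof.
case: (leP 0 (z - x)) => h.
  rewrite pp_id // pp_0; first by ring.
  by rewrite -opprB oppr_le0.
rewrite pp_0 ?ltW // pp_id; first by ring.
by rewrite -opprB oppr_ge0 ltW.
Qed.

Lemma pp_sq r p : r <= p -> pp r ^+ 2 <= p ^+ 2.
Proof.
move=> h; case: (leP r 0) => hr.
  by rewrite pp_0 // expr0n sqr_ge0.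
rewrite pp_id; last exact: ltW.
rewrite !expr2; apply: ler_pM => //; exact: ltW.
Qed.

Lemma pp_le x y : x <= y -> pp x <= pp y.
Proof. by move=> h; rewrite /pp ge_max !le_max h lexx !orbT. Qed.

Lemma bracket e : 0 <= e -> e <= zeta 1 ->
  exists2 m, (m <= N)%N & zeta m.+2 <= e <= zeta m.+1.
Proof.
move=> e0 e1.
suff H : forall n k, (N - k = n)%N -> (k <= N)%N -> e <= zeta k.+1 ->
  exists2 m, (m <= N)%N & zeta m.+2 <= e <= zeta m.+1 by exact: (H _ 0%N).
elim=> [|n IH] k hk kN ek.
  have kE : k = N by apply/eqP; rewrite eqn_leq kN -subn_eq0 hk.
  by exists k => //; rewrite ek andbT kE hzero.
case: (leP (zeta k.+2) e) => h.
  by exists k => //; rewrite h ek.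
have kN' : (k < N)%N by rewrite -subn_gt0 hk.
apply: (IH k.+1) => //; last exact: ltW.
by rewrite subnS hk.
Qed.

Lemma Sf_alst m a (j : nat) : (m <= N)%N -> (j <= N)%N -> 0 <= a -> a <= 1 ->
  Sf (alst m a) j = pp (zeta j - (a * zeta m.+1 + (1 - a) * zeta m.+2)).
Proof.
move=> mN jN a0 a1.
rewrite /Sf (alst_sum a (fun i => if (j <= i)%N then zeta j - zeta i.+1 else 0) mN).
have z12 : zeta m.+2 <= zeta m.+1 by apply/ltW/hzeta; rewrite ltnS.
case: (leqP j m) => jm.
  have zj : zeta m.+1 <= zeta j by apply: zmono; lia.
  rewrite (leqW jm) pp_id; first by ring.
  nra.
case: (leqP j m.+1) => jm1.
  have -> : j = m.+1 by apply/eqP; rewrite eqn_leq jm1 jm.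
  rewrite mulr0 add0r pp_id; first by ring.
  nra.
have zj : zeta j <= zeta m.+2 by apply: zmono; lia.
rewrite !mulr0 addr0 pp_0 //; nra.
Qed.

Lemma Sf_ge (al : 'I_N.+2 -> R) (j : nat) : (forall i, 0 <= al i) ->
  \sum_(i < N.+2) al i = 1 -> (j <= N)%N ->
  pp (zeta j - \sum_(i < N.+2) al i * zeta i.+1) <= Sf al j.
Proof.
move=> h0 h1 jN; rewrite /pp ge_max; apply/andP; split.
- have -> : zeta j = \sum_(i < N.+2) al i * zeta j by rewrite -mulr_suml h1 mul1r.
  rewrite -sumrB /Sf; apply: ler_sum => i _; rewrite -mulrBr; apply: ler_wpM2l => //.
  case: leqP => // ij; rewrite subr_le0; have := ltn_ord i => ?; apply: zmono; lia.
- rewrite /Sf; apply: sumr_ge0 => i _; apply: mulr_ge0 => //.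
  case: leqP => // ij; rewrite subr_ge0; have := ltn_ord i => ?; apply: zmono; lia.
Qed.

Lemma E_bounds (al : 'I_N.+2 -> R) : (forall i, 0 <= al i) ->
  \sum_(i < N.+2) al i = 1 ->
  0 <= \sum_(i < N.+2) al i * zeta i.+1 <= zeta 1.
Proof.
move=> h0 h1; apply/andP; split.
- apply: sumr_ge0 => i _; apply: mulr_ge0 => //; rewrite -hzero; have := ltn_ord i => ?; apply: zmono; lia.
- have -> : zeta 1 = \sum_(i < N.+2) al i * zeta 1 by rewrite -mulr_suml h1 mul1r.
  apply: ler_sum => i _; apply: ler_wpM2l => //; have := ltn_ord i => ?; apply: zmono; lia.
Qed.

Lemma main_sec (y : 'I_N.+1 -> R) :
  exists (nu : 'I_N.+1 -> R) (alpha : 'I_N.+2 -> R),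
    [/\ nonneg_orthant nu, in_simplex alpha,
        (forall (nu' : 'I_N.+1 -> R) (alpha' : 'I_N.+2 -> R),
            nonneg_orthant nu' -> in_simplex alpha' ->
            wfun L zeta y nu alpha <= wfun L zeta y nu' alpha') &
        exists2 m : nat, (m <= N)%N &
          exists a : R, forall i : 'I_N.+2,
            alpha i = if nat_of_ord i == m then a
                      else if nat_of_ord i == m.+1 then 1 - a
                      else 0].
Proof.
pose Psi := fun e : R => L / 2 * \sum_(j < N.+1) (pp (y j + pp (zeta j - e) / sq j)) ^+ 2 + L * e.
have cPsi : continuous Psi.
  exact: (@cont_test R N.+1 L y (fun j => (sq j)^-1) (fun j => zeta j)).
have z1 : 0 <= zeta 1 by rewrite -hzero; apply: zmono; lia.
have [e eI emin] := EVT_min z1 (continuous_subspaceT cPsi).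
move: eI; rewrite in_itv /= => /andP [e0 e1].
have [m mN /andP [em2 em1]] := bracket e0 e1.
have d0 : 0 < zeta m.+1 - zeta m.+2 by rewrite subr_gt0 hzeta //; lia.
pose a := (e - zeta m.+2) / (zeta m.+1 - zeta m.+2).
have a0 : 0 <= a by apply: divr_ge0; [rewrite subr_ge0 | exact: ltW].
have a1 : a <= 1 by rewrite /a ler_pdivrMr // mul1r; lra.
have ea : a * zeta m.+1 + (1 - a) * zeta m.+2 = e.
  by rewrite /a; field; rewrite gt_eqF.
pose al := alst m a.
pose u := fun j : 'I_N.+1 => \sum_(i < N.+2) al i * (@xpt R N zeta i j - L^-1 * @gpt R N L zeta i j).
pose nu := fun j => pp (u j - y j).
have Hc : forall al' : 'I_N.+2 -> R,
    \sum_(i < N.+2) al' i * (fval N L zeta i - (2 * L)^-1 * sqnorm (@gpt R N L zeta i))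
    = L * \sum_(i < N.+2) al' i * zeta i.+1.
  move=> al'; rewrite mulr_sumr; apply: eq_bigr => i _; rewrite c_eq; ring.
have Hval : wfun L zeta y nu al = Psi e.
  rewrite /wfun Hc /Psi; congr (_ * _ + _ * _).
    rewrite /sqnorm; apply: eq_bigr => j _.
    rewrite /nu pp_fact /u u_eq opprK Sf_alst // ?ea //.
    by rewrite -ltnS.
  by rewrite /al (alst_sum a (fun k => zeta k.+1) mN) ea.
exists nu, al; split.
- by move=> j; exact: pp_ge0.
- split.
    by move=> i; rewrite /al /alst; repeat case: ifP => _; rewrite ?subr_ge0.
  have H := alst_sum a (fun _ : nat => (1:R)) mN; rewrite /= in H.
  rewrite (eq_bigr (fun i => alst m a i * 1)) ?H; first by ring.
  by move=> i _; rewrite mulr1.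
- move=> nu' al' hnu [h0 h1]; rewrite Hval.
  have /andP [E0 E1] := E_bounds h0 h1.
  apply: le_trans (emin (\sum_(i < N.+2) al' i * zeta i.+1) _) _; first by rewrite in_itv /= E0 E1.
  rewrite /wfun Hc /Psi; apply: lerD => //.
  apply: ler_wpM2l; first by apply: divr_ge0 => //; exact: ltW.
  rewrite /sqnorm; apply: ler_sum => j _; apply: pp_sq.
  have jN : (j <= N)%N by rewrite -ltnS.
  rewrite u_eq opprK -addrA lerD2l.
  apply: le_trans (_ : _ <= Sf al' j / sq j) _.
    apply: ler_wpM2r; first by rewrite invr_ge0 ltW // sq_gt0 //; lia.
    exact: Sf_ge.
  by rewrite lerDr hnu.
- by exists m => //; exists a => i.
Qed.

End Alg.

Theorem lemma2 (R : realType) (N : nat) (L : R) (zeta : nat -> R)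
  (hN : (0 < N)%N) (hL : 0 < L)
  (hzeta : forall i : nat, (i <= N.+1)%N -> zeta i.+1 < zeta i)
  (hzero : zeta N.+2 = 0)
  (y : 'I_N.+1 -> R) :
  exists (nu : 'I_N.+1 -> R) (alpha : 'I_N.+2 -> R),
    [/\ nonneg_orthant nu, in_simplex alpha,
        (forall (nu' : 'I_N.+1 -> R) (alpha' : 'I_N.+2 -> R),
            nonneg_orthant nu' -> in_simplex alpha' ->
            wfun L zeta y nu alpha <= wfun L zeta y nu' alpha') &
        exists2 m : nat, (m <= N)%N &
          exists a : R, forall i : 'I_N.+2,
            alpha i = if nat_of_ord i == m then a
                      else if nat_of_ord i == m.+1 then 1 - a
                      else 0].
Proof. exact: main_sec. Qed.
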